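(* Let $T, N, s, \delta$ be positive integers and $\beta$ a nonnegative integer. Let $x_1,\dots,x_T$ be nonnegative integers, where $x_t$ is the number of shifts starting at time step $t$, every shift started at time $t$ occupying the time steps $t, t+1, \dots, t+\delta-1$. Set $x_\tau := 0$ for $\tau \le 0$ and, for $t\in\{1,\dots,T\}$, define $$z_t := \sum_{\tau=t-\delta-\beta+1}^{t} x_\tau .$$ Suppose that $$\sum_{t=1}^T x_t = sN \qquad\text{and}\qquad z_t \le N \ \text{ for all } t\in\{1,\dots,T\}.$$ Then the $sN$ shifts can be assigned to $N$ drivers such that each driver works exactly $s$ shifts (each of $\delta$ time steps), and each driver has a break of at least $\beta$ time steps between any two consecutive shifts assigned to that driver; i.e., if a driver is assigned shifts starting at times $t_1 < t_2$, then $t_2 \ge t_1 + \delta + \beta$.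
   Context: Time is discretized into steps $1,\dots,T$. A shift starting at time $t$ is active during time steps $t,\dots,t+\delta-1$. The ''extended shift'' of a shift starting at $t_1$ is the interval $[t_1, t_1+\delta+\beta)$, i.e. the shift together with the mandatory break of $\beta$ time steps after it; a driver has adequate breaks exactly when the extended shifts assigned to that driver are pairwise disjoint. *)

(* Defs.v *)
From mathcomp Require Import all_boot.
Set Implicit Arguments. Unset Strict Implicit. Unset Printing Implicit Defensive.

(* z_t = sum_{tau = t - delta - beta + 1}^{t} x_tau, with x_tau := 0 for tau <= 0.
   Lower bound truncated at 0 (nat), and tau = 0 excluded by the filter 0 < tau. *)
Definition zsum (x : nat -> nat) (delta beta t : nat) : nat :=
  \sum_(t.+1 - (delta + beta) <= tau < t.+1 | 0 < tau) x tau.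

(* An assignment: f d k = start time of the k-th shift (k < s) of driver d (d < N). *)

Definition realizes (T N s : nat) (x : nat -> nat) (f : 'I_N -> 'I_s -> nat) : Prop :=
  (forall d k, 1 <= f d k <= T) /\
  (forall t, 1 <= t <= T ->
     #|[set p : 'I_N * 'I_s | f p.1 p.2 == t]| = x t).

Definition adequate_breaks (N s delta beta : nat) (f : 'I_N -> 'I_s -> nat) : Prop :=
  forall d (k1 k2 : 'I_s), k1 != k2 ->
    (f d k1 + delta + beta <= f d k2) || (f d k2 + delta + beta <= f d k1).

(* Main.v *)
Require Import Defs.
From mathcomp Require Import all_boot.
From mathcomp Require Import zify.

Definition Cs (x : nat -> nat) (t : nat) := \sum_(1 <= tau < t.+1) x tau.

Lemma Cs0 x : Cs x 0 = 0.
Proof. by rewrite /Cs big_geq. Qed.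

Lemma Cs_split x t' t : 1 <= t' <= t.+1 ->
  Cs x t'.-1 + \sum_(t' <= tau < t.+1) x tau = Cs x t.
Proof.
move=> /andP[h1 h2]; rewrite /Cs prednK //.
by rewrite -big_cat_nat.
Qed.

Lemma Cs_mono x m n : m <= n -> Cs x m <= Cs x n.
Proof.
move=> hmn; rewrite -(@Cs_split x m.+1 n) ?ltnS //=.
exact: leq_addr.
Qed.

Definition aa x T i := find (fun t => i < Cs x t) (iota 0 T.+1).

Lemma aa_spec x T i : i < Cs x T ->
  [/\ aa x T i <= T, i < Cs x (aa x T i) & forall t, t < aa x T i -> Cs x t <= i].
Proof.
move=> hi.
have hh : has (fun t => i < Cs x t) (iota 0 T.+1).
  apply/hasP; exists T; first by rewrite mem_iota add0n ltnSn.
  by [].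
have hlt : aa x T i < T.+1 by move: hh; rewrite has_find size_iota.
split; first by [].
- have := nth_find 0 hh; rewrite nth_iota //.
- move=> t ht; have := before_find 0 ht; rewrite nth_iota ?add0n; last first.
    exact: ltn_trans ht hlt.
  by move/negbT; rewrite -leqNgt.
Qed.

Lemma aa_ge1 x T i : i < Cs x T -> 1 <= aa x T i.
Proof.
move=> hi; have [_ h _] := aa_spec _ _ _ hi.
case E: (aa x T i) h => [|n] //; by rewrite Cs0.
Qed.

Lemma aa_char x T i t : i < Cs x T -> 1 <= t <= T ->
  (aa x T i == t) = (Cs x t.-1 <= i < Cs x t).
Proof.
move=> hi /andP[h1 h2]; have [ha hP hB] := aa_spec _ _ _ hi.
have hg := aa_ge1 _ _ _ hi.
apply/eqP/andP.
- move=> <-; split => //; apply: hB; rewrite prednK //.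
- move=> [hl hr]; apply/eqP; rewrite eqn_leq; apply/andP; split.
  + rewrite leqNgt; apply/negP => lt; have := hB _ lt; rewrite leqNgt hr //.
  + rewrite leqNgt; apply/negP => lt.
    have : Cs x (aa x T i) <= Cs x t.-1 by apply: Cs_mono; lia.
    lia.
Qed.

Lemma aa_mono x T i j : i <= j -> j < Cs x T -> aa x T i <= aa x T j.
Proof.
move=> hij hj; have hi : i < Cs x T by lia.
have [_ hPi hBi] := aa_spec _ _ _ hi; have [hj1 hPj hBj] := aa_spec _ _ _ hj.
rewrite leqNgt; apply/negP => lt.
have := hBi _ lt; lia.
Qed.

Lemma aa_sep (T N delta beta : nat) (x : nat -> nat)
  (hz : forall t, 1 <= t <= T -> zsum x delta beta t <= N) i j :
  i + N <= j -> j < Cs x T -> aa x T i + delta + beta <= aa x T j.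
Proof.
move=> hij hj; have hi : i < Cs x T by lia.
have [hai hPi hBi] := aa_spec _ _ _ hi; have [haj hPj hBj] := aa_spec _ _ _ hj.
have g1 := aa_ge1 _ _ _ hi; have g2 := aa_ge1 _ _ _ hj.
have hm := aa_mono x T i j ltac:(lia) hj.
rewrite leqNgt; apply/negP => lt.
set t' := aa x T i in hai hPi hBi g1 hm lt.
set t := aa x T j in haj hPj hBj g2 hm lt.
have hc := hBi t'.-1 ltac:(lia).
have hs := Cs_split x t' t ltac:(lia).
have hzt := hz t ltac:(lia).
have : \sum_(t' <= tau < t.+1) x tau <= zsum x delta beta t.
  rewrite /zsum [X in _ <= X](@big_cat_nat _ _ _ t') /=; [|lia|lia].
  apply: leq_trans (leq_addl _ _); rewrite leq_eqVlt; apply/orP; left; apply/eqP.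
  rewrite big_nat_cond [RHS]big_nat_cond; apply: eq_bigl => k; rewrite andbT.
  case: (leqP t' k) => h /=; last by []. by rewrite (leq_trans g1 h) andbT.
lia.
Qed.

Lemma count_int lo hi M :
  count (fun i => lo <= i < hi) (iota 0 M) = minn hi M - lo.
Proof.
elim: M => [|M IH]; first by rewrite /= minn0.
rewrite -addn1 iotaD count_cat IH /= add0n.
case: (leqP lo M) => h1; case: (ltnP M hi) => h2 /=; lia.
Qed.

Lemma card_ord_int M lo hi : hi <= M ->
  #|[set i : 'I_M | lo <= i < hi]| = hi - lo.
Proof.
move=> hM.
rewrite cardE.
have -> : size (enum [set i : 'I_M | lo <= i < hi]) =
          count (fun i : 'I_M => lo <= i < hi) (enum 'I_M).
  rewrite -size_filter /enum_mem; congr size.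
  rewrite -filter_predI; apply: eq_filter => i /=; by rewrite !inE andbT.
rewrite -(count_map (@nat_of_ord M) (fun i => lo <= i < hi)) val_enum_ord.
rewrite count_int; lia.
Qed.

Theorem lemma1 (T N s delta beta : nat) (x : nat -> nat)
  (hT : 0 < T) (hN : 0 < N) (hs : 0 < s) (hdelta : 0 < delta)
  (hsum : \sum_(1 <= t < T.+1) x t = s * N)
  (hz : forall t, 1 <= t <= T -> zsum x delta beta t <= N) :
  exists f : 'I_N -> 'I_s -> nat,
    realizes T x f /\ adequate_breaks delta beta f.
Proof.
have hC : Cs x T = s * N by [].
have gP : forall (p : 'I_N * 'I_s), p.2 * N + p.1 < s * N.
  move=> [d k] /=; have := ltn_ord d; have := ltn_ord k; nia.
pose g (p : 'I_N * 'I_s) : 'I_(s * N) := Ordinal (gP p).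
have g_inj : injective g.
  move=> [d k] [d' k'] /(congr1 val) /= E.
  have E1 := congr1 (fun m => m %% N) E; have E2 := congr1 (fun m => m %/ N) E.
  rewrite /= !modnMDl !divnMDl // !modn_small // !divn_small // !addn0 in E1 E2.
  by congr pair; apply: val_inj.
exists (fun d k => aa x T (k * N + d)); split; last first.
  move=> d k1 k2 hk.
  have lt2 := gP (d, k2); have lt1 := gP (d, k1); rewrite /= -hC in lt1 lt2.
  case: (ltngtP k1 k2) => h.
  - apply/orP; left; apply: (aa_sep _ _ _ _ _ hz) => //; nia.
  - apply/orP; right; apply: (aa_sep _ _ _ _ _ hz) => //; nia.
  - by move: hk; rewrite (val_inj h) eqxx.
split.
  move=> d k; have lt := gP (d, k); rewrite /= -hC in lt.
  have [h _ _] := aa_spec _ _ _ lt; by rewrite (aa_ge1 _ _ _ lt) h.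
move=> t ht.
transitivity #|[set i : 'I_(s * N) | aa x T i == t]|.
  rewrite -(card_imset _ g_inj); apply: eq_card => i; rewrite [RHS]inE.
  apply/imsetP/idP.
  - by move=> [p]; rewrite inE => Hp ->.
  - move=> Hi.
    have q : i %/ N < s by rewrite ltn_divLR // ltn_ord.
    exists (Ordinal (ltn_pmod i hN), Ordinal q); first by rewrite inE /= -divn_eq.
    by apply: val_inj => /=; rewrite -divn_eq.
transitivity #|[set i : 'I_(s * N) | Cs x t.-1 <= i < Cs x t]|.
  apply: eq_card => i; rewrite !inE aa_char //.
  by rewrite hC ltn_ord.
rewrite card_ord_int; last by rewrite -hC; apply: Cs_mono; case/andP: ht.
have := Cs_split x t t ltac:(lia).
by rewrite big_nat1; lia.
Qed.
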